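(* Let $X$ and $Y$ be $n$-dimensional compacta, $n\geq 1$. If $H^n(X)\neq 0$, then there is an $\varepsilon>0$ such that every $\varepsilon$-mapping $f:X\to Y$ satisfies $H^n(f)\neq 0$, where $H^n(f):H^n(Y)\to H^n(X)$ is the induced homomorphism.
   Context: A compactum is a compact metric space; all maps are continuous. $H^*(\cdot)$ denotes Čech cohomology with integer coefficients. A map $f:X\to Y$ from a metric space is an $\varepsilon$-mapping if $\operatorname{diam} f^{-1}(y)<\varepsilon$ for every $y\in f(X)$. *)

(* Defs.v *)
From Stdlib Require Import Reals ZArith List.
Import ListNotations.
Open Scope R_scope.

Record MetricSpace := {
  mcarrier :> Type;
  dist : mcarrier -> mcarrier -> R;
  dist_nonneg : forall x y, 0 <= dist x y;
  dist_sym : forall x y, dist x y = dist y x;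
  dist_eq0 : forall x y, dist x y = 0 <-> x = y;
  dist_tri : forall x y z, dist x z <= dist x y + dist y z }.

Definition is_open {X : MetricSpace} (U : X -> Prop) : Prop :=
  forall x, U x -> exists r, 0 < r /\ forall y, dist X x y < r -> U y.

Definition compact_space (X : MetricSpace) : Prop :=
  forall (I : Type) (U : I -> X -> Prop),
    (forall i, is_open (U i)) -> (forall x, exists i, U i x) ->
    exists l : list I, forall x, exists i, In i l /\ U i x.

Definition continuous {X Y : MetricSpace} (f : X -> Y) : Prop :=
  forall x eps, 0 < eps -> exists delta, 0 < delta /\
    forall x', dist X x x' < delta -> dist Y (f x) (f x') < eps.

Definition diam_lt {X : MetricSpace} (A : X -> Prop) (eps : R) : Prop :=
  exists d, d < eps /\ forall x x', A x -> A x' -> dist X x x' <= d.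

Definition eps_mapping {X Y : MetricSpace} (eps : R) (f : X -> Y) : Prop :=
  forall y, (exists x, f x = y) -> diam_lt (fun x => f x = y) eps.

Record fcover (X : Type) := { fc_size : nat; fc_set : nat -> X -> Prop }.
Arguments fc_size {X}.
Arguments fc_set {X}.

Definition open_fcover {X : MetricSpace} (U : fcover X) : Prop :=
  (forall i, (i < fc_size U)%nat -> is_open (fc_set U i)) /\
  (forall x, exists i, (i < fc_size U)%nat /\ fc_set U i x).

Definition refines_via {X : Type} (W U : fcover X) (lam : nat -> nat) : Prop :=
  forall j, (j < fc_size W)%nat ->
    (lam j < fc_size U)%nat /\ forall x, fc_set W j x -> fc_set U (lam j) x.

Definition order_le {X : Type} (V : fcover X) (n : nat) : Prop :=
  forall l : list nat, NoDup l -> Forall (fun i => (i < fc_size V)%nat) l ->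
    length l = (n + 2)%nat -> ~ exists x, Forall (fun i => fc_set V i x) l.

Definition dim_le (X : MetricSpace) (n : nat) : Prop :=
  forall U : fcover X, open_fcover U ->
    exists V : fcover X, open_fcover V /\ (exists lam, refines_via V U lam) /\
      order_le V n.

Definition covering_dim (X : MetricSpace) (n : nat) : Prop :=
  dim_le X n /\ match n with O => inhabited X | S m => ~ dim_le X m end.

(* an (ordered) m-simplex of the nerve: a list of m+1 indices whose members meet *)
Definition is_simplex {X : Type} (U : fcover X) (m : nat) (s : list nat) : Prop :=
  length s = S m /\ Forall (fun i => (i < fc_size U)%nat) s /\
  exists x, Forall (fun i => fc_set U i x) s.

Fixpoint del {A : Type} (j : nat) (l : list A) : list A :=
  match l, j with
  | [], _ => []
  | _ :: t, O => t
  | x :: t, S j' => x :: del j' t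
  end.

Definition sgn (j : nat) : Z := if Nat.even j then 1%Z else (-1)%Z.

Definition cochain := list nat -> Z.

Definition cobdry (b : cochain) : cochain := fun s =>
  fold_right Z.add 0%Z (map (fun j => (sgn j * b (del j s))%Z) (seq 0 (length s))).

Definition is_cocycle {X : Type} (U : fcover X) (m : nat) (c : cochain) : Prop :=
  forall s, is_simplex U (S m) s -> cobdry c s = 0%Z.

Definition is_coboundary {X : Type} (U : fcover X) (m : nat) (c : cochain) : Prop :=
  match m with
  | O => forall s, is_simplex U 0 s -> c s = 0%Z
  | S m' => exists b : cochain, forall s, is_simplex U m s -> c s = cobdry b s
  end.

(* a representative of an element of H^m(X): a finite open cover with an m-cocycle *)
Definition cech_rep {X : MetricSpace} (m : nat) (U : fcover X) (c : cochain) : Prop :=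
  open_fcover U /\ is_cocycle U m c.

(* the class of (U,c) is zero in the direct limit: it becomes a coboundary
   after passing to some refinement *)
Definition cech_class_zero {X : MetricSpace} (m : nat) (U : fcover X) (c : cochain)
  : Prop :=
  exists (W : fcover X) (lam : nat -> nat),
    open_fcover W /\ refines_via W U lam /\
    is_coboundary W m (fun s => c (map lam s)).

Definition cech_nonzero (X : MetricSpace) (m : nat) : Prop :=
  exists (U : fcover X) (c : cochain), cech_rep m U c /\ ~ cech_class_zero m U c.

Definition preimage_cover {X Y : MetricSpace} (f : X -> Y) (U : fcover Y) : fcover X :=
  {| fc_size := fc_size U; fc_set := fun i x => fc_set U i (f x) |}.

(* H^m(f) : H^m(Y) -> H^m(X) sends [(U,c)] to [(f^-1 U, c)];
   H^m(f) <> 0 means some class is sent to a nonzero class *)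
Definition cech_map_nonzero {X Y : MetricSpace} (f : X -> Y) (m : nat) : Prop :=
  exists (U : fcover Y) (c : cochain),
    cech_rep m U c /\ ~ cech_class_zero m (preimage_cover f U) c.

(* Main.v *)
From Pilot Require Import Defs.
From Stdlib Require Import Reals ZArith List Lia Lra Classical FunctionalExtensionality ClassicalEpsilon.
Import Pilot.Defs.
Import ListNotations.
Open Scope R_scope.

Definition Tc (x:nat) (b:cochain) : cochain := fun u => b (x::u).

Lemma fold_map_opp (l:list nat) (h:nat->Z) :
  fold_right Z.add 0%Z (map (fun j => (- h j)%Z) l) = (- fold_right Z.add 0%Z (map h l))%Z.
Proof. induction l; simpl; lia. Qed.

Lemma cobdry_cons b x t : cobdry b (x::t) = (b t - cobdry (Tc x b) t)%Z.
Proof.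
  unfold cobdry. simpl length. change (seq 0 (S (length t))) with (0%nat :: seq 1 (length t)).
  rewrite <- seq_shift. rewrite map_cons, map_map. cbn [fold_right].
  unfold Tc.
  assert (H: map (fun j => (sgn (S j) * b (del (S j) (x::t)))%Z) (seq 0 (length t)) =
     map (fun j => (- (sgn j * b (x :: del j t)))%Z) (seq 0 (length t))).
  { apply map_ext. intros j. change (del (S j) (x::t)) with (x :: del j t). unfold sgn. rewrite Nat.even_succ. unfold Nat.odd.
    destruct (Nat.even j); cbn [negb]; lia. }
  rewrite H, fold_map_opp. change (del 0 (x::t)) with t. change (sgn 0) with 1%Z. lia.
Qed.

Lemma cobdry_nil b : cobdry b [] = 0%Z.
Proof. reflexivity. Qed.

Lemma cobdry_add b b' t : cobdry (fun u => (b u + b' u)%Z) t = (cobdry b t + cobdry b' t)%Z.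
Proof.
  revert b b'; induction t as [|x t IH]; intros b b'; [reflexivity|].
  rewrite !cobdry_cons. change (Tc x (fun u => (b u + b' u)%Z)) with (fun u => (Tc x b u + Tc x b' u)%Z). rewrite (IH (Tc x b) (Tc x b')). lia.
Qed.

Lemma cobdry_opp b t : cobdry (fun u => (- b u)%Z) t = (- cobdry b t)%Z.
Proof.
  revert b; induction t as [|x t IH]; intros b; [reflexivity|].
  rewrite !cobdry_cons. change (Tc x (fun u => (- b u)%Z)) with (fun u => (- Tc x b u)%Z). rewrite (IH (Tc x b)). lia.
Qed.

Lemma cobdry_sub b b' t : cobdry (fun u => (b u - b' u)%Z) t = (cobdry b t - cobdry b' t)%Z.
Proof.
  revert b b'; induction t as [|x t IH]; intros b b'; [reflexivity|].
  rewrite !cobdry_cons. change (Tc x (fun u => (b u - b' u)%Z)) with (fun u => (Tc x b u - Tc x b' u)%Z). rewrite (IH (Tc x b) (Tc x b')). lia.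
Qed.

Lemma cobdry_zero t : cobdry (fun _ => 0%Z) t = 0%Z.
Proof.
  induction t as [|x t IH]; [reflexivity|]. rewrite cobdry_cons. unfold Tc. rewrite IH. lia.
Qed.

Lemma Tc_cobdry x b : Tc x (cobdry b) = fun u => (b u - cobdry (Tc x b) u)%Z.
Proof. apply functional_extensionality; intro u. unfold Tc at 1. apply cobdry_cons. Qed.

Lemma cobdry_cobdry b t : cobdry (cobdry b) t = 0%Z.
Proof.
  revert b; induction t as [|x t IH]; intros b; [reflexivity|].
  rewrite cobdry_cons, Tc_cobdry, cobdry_sub, IH. lia.
Qed.

Lemma cobdry_map (g : nat -> nat) b s :
  cobdry (fun t => b (map g t)) s = cobdry b (map g s).
Proof.
  revert b; induction s as [|x s IH]; intros b; [reflexivity|].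
  rewrite cobdry_cons. simpl map. rewrite cobdry_cons.
  rewrite <- IH. f_equal.
Qed.

Definition memb (v : nat) (t : list nat) : bool := existsb (Nat.eqb v) t.

Lemma memb_In v t : memb v t = true <-> In v t.
Proof.
  unfold memb. rewrite existsb_exists. split.
  - intros [y [Hy He]]. apply Nat.eqb_eq in He. subst; auto.
  - intros H. exists v. split; auto. apply Nat.eqb_refl.
Qed.

Lemma memb_notIn v t : memb v t = false <-> ~ In v t.
Proof.
  rewrite <- memb_In. destruct (memb v t); split; intros; try congruence; auto.
Qed.

Fixpoint Ev (v : nat) (phi : cochain) (s : list nat) : Z :=
  match s with
  | [] => 0%Z
  | x :: t => if Nat.eqb x v then (if memb v t then 0%Z else phi t)
              else (- Ev v (Tc x phi) t)%Z
  end.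

Definition Z0 (v : nat) (phi : cochain) : cochain :=
  fun t => if memb v t then 0%Z else phi t.

Lemma Ev_notin v phi t : memb v t = false -> Ev v phi t = 0%Z.
Proof.
  revert phi; induction t as [|x t IH]; intros phi H; [reflexivity|].
  simpl in H |- *. apply Bool.orb_false_iff in H as [H1 H2].
  rewrite Nat.eqb_sym in H1. rewrite H1, IH; auto.
Qed.

Lemma Ev_sub v phi psi t : Ev v (fun u => (phi u - psi u)%Z) t = (Ev v phi t - Ev v psi t)%Z.
Proof.
  revert phi psi; induction t as [|x t IH]; intros phi psi; [reflexivity|].
  simpl. destruct (Nat.eqb x v).
  - destruct (memb v t); lia.
  - change (Tc x (fun u => (phi u - psi u)%Z)) with (fun u => (Tc x phi u - Tc x psi u)%Z). rewrite (IH (Tc x phi) (Tc x psi)). lia.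
Qed.

Lemma Ev_agree v phi phi' s :
  (forall u, memb v u = false -> incl u s -> S (length u) = length s -> phi u = phi' u) ->
  Ev v phi s = Ev v phi' s.
Proof.
  revert phi phi'; induction s as [|x t IH]; intros phi phi' H; [reflexivity|].
  simpl. destruct (Nat.eqb x v) eqn:Hx.
  - destruct (memb v t) eqn:Hm; auto.
    apply H; auto. intros a Ha; right; auto.
  - f_equal. apply IH. intros u Hu Hi Hl. unfold Tc. apply H.
    + simpl. rewrite Nat.eqb_sym, Hx. auto.
    + intros a [Ha|Ha]; [left; auto|right; auto].
    + simpl. lia.
Qed.

Lemma cobdry_Z0 v phi t :
  cobdry (Z0 v phi) t = if memb v t then Ev v phi t else cobdry phi t.
Proof.
  revert phi; induction t as [|x t IH]; intros phi; [reflexivity|].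
  rewrite cobdry_cons. simpl memb. simpl Ev.
  destruct (Nat.eqb x v) eqn:Hx.
  - apply Nat.eqb_eq in Hx; subst x. rewrite Nat.eqb_refl. simpl.
    assert (Tc v (Z0 v phi) = fun _ => 0%Z).
    { apply functional_extensionality; intro u. unfold Tc, Z0. simpl. rewrite Nat.eqb_refl. auto. }
    rewrite H, cobdry_zero. unfold Z0. destruct (memb v t); lia.
  - rewrite Nat.eqb_sym, Hx. simpl.
    assert (Tc x (Z0 v phi) = Z0 v (Tc x phi)).
    { apply functional_extensionality; intro u. unfold Tc, Z0. simpl. rewrite Nat.eqb_sym, Hx. auto. }
    rewrite H, IH. unfold Z0. destruct (memb v t); [lia|].
    rewrite cobdry_cons. auto.
Qed.

Lemma cobdry_Ev v phi s : cobdry (Ev v phi) s = (- Ev v (cobdry phi) s)%Z.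
Proof.
  revert phi; induction s as [|x t IH]; intros phi; [reflexivity|].
  rewrite cobdry_cons.
  destruct (Nat.eqb x v) eqn:Hx.
  - apply Nat.eqb_eq in Hx; subst x.
    assert (Tc v (Ev v phi) = Z0 v phi).
    { apply functional_extensionality; intro u. unfold Tc, Z0. simpl. rewrite Nat.eqb_refl. auto. }
    rewrite H, cobdry_Z0. simpl (Ev v (cobdry phi) (v::t)). rewrite Nat.eqb_refl.
    destruct (memb v t) eqn:Hm; [lia|].
    rewrite Ev_notin by auto. lia.
  - assert (Tc x (Ev v phi) = fun u => (- Ev v (Tc x phi) u)%Z).
    { apply functional_extensionality; intro u. unfold Tc. simpl. rewrite Hx. auto. }
    rewrite H, cobdry_opp, IH. simpl (Ev v (cobdry phi) (x::t)). rewrite Hx, Tc_cobdry, Ev_sub. lia.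
Qed.

Definition closedS (P : list nat -> Prop) := forall t t', P t -> incl t' t -> P t'.

Lemma Acyc : forall m N (P : list nat -> Prop) (a : cochain),
  closedS P -> (forall t i, P t -> In i t -> (i < N)%nat) ->
  (forall t, P t -> NoDup t -> length t = S m -> False) ->
  (forall s, P s -> length s = S (S m) -> cobdry a s = 0%Z) ->
  exists beta, forall t, P t -> length t = S m -> a t = cobdry beta t.
Proof.
  induction m as [|m IHm].
  - intros N P a _ _ Hdim _. exists (fun _ => 0%Z). intros t Ht Hl. exfalso.
    apply (Hdim t Ht); auto. destruct t as [|x [|y t]]; simpl in Hl; try discriminate.
    constructor; [simpl; auto|constructor].
  - induction N as [|N IHN]; intros P a Hcl Hb Hdim Hcoc.
    + exists (fun _ => 0%Z). intros t Ht Hl. destruct t as [|x t]; simpl in Hl; [discriminate|].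
      specialize (Hb _ x Ht (or_introl eq_refl)). lia.
    + set (P' := fun t => P t /\ memb N t = false).
      destruct (IHN P' a) as [beta' Hb'].
      { intros t t' [Ht Hm] Hi. split; [eapply Hcl; eauto|].
        apply memb_notIn. apply memb_notIn in Hm. intro H; apply Hm, Hi, H. }
      { intros t i [Ht Hm] Hi. specialize (Hb t i Ht Hi). apply memb_notIn in Hm.
        assert (i <> N) by (intro; subst; auto). lia. }
      { intros t [Ht _]. apply Hdim; auto. }
      { intros s [Hs _]. apply Hcoc; auto. }
      set (a1 := fun t => (a t - cobdry beta' t)%Z).
      assert (Ha1c : forall s, P s -> length s = S (S (S m)) -> cobdry a1 s = 0%Z).
      { intros s Hs Hl. unfold a1. rewrite cobdry_sub, cobdry_cobdry, Hcoc; auto. }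
      assert (Ha10 : forall t, P t -> memb N t = false -> length t = S (S m) -> a1 t = 0%Z).
      { intros t Ht Hm Hl. unfold a1. rewrite <- Hb'; [lia| split; auto | auto]. }
      set (lk := fun u => P (N :: u) /\ memb N u = false).
      destruct (IHm (S N) lk (Tc N a1)) as [psi Hpsi].
      { intros t t' [Ht Hm] Hi. split.
        - eapply Hcl; eauto. intros z [Hz|Hz]; [left; auto|right; auto].
        - apply memb_notIn. apply memb_notIn in Hm. intro H; apply Hm, Hi, H. }
      { intros t i [Ht _] Hi. apply (Hb _ i Ht). right; auto. }
      { intros t [Ht Hm] Hnd Hl. apply (Hdim (N::t) Ht).
        - constructor; auto. apply memb_notIn; auto.
        - simpl; lia. }
      { intros s [Hs Hm] Hl.
        assert (H1 := Ha1c (N::s) Hs ltac:(simpl; lia)).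
        rewrite cobdry_cons in H1. rewrite Ha10 in H1; auto.
        - lia.
        - eapply Hcl; eauto. intros z Hz; right; auto. }
      exists (fun u => (beta' u + (Tc N a1 u - Z0 N (Tc N a1) u) + (- Ev N psi u))%Z).
      intros t Ht Hl.
      rewrite !cobdry_add, cobdry_sub, cobdry_opp, cobdry_Ev, cobdry_Z0.
      assert (Hat : a t = (a1 t + cobdry beta' t)%Z) by (unfold a1; lia).
      rewrite Hat.
      destruct (memb N t) eqn:Hm.
      * assert (HNt : P (N::t)).
        { eapply Hcl; eauto. intros z [Hz|Hz]; [subst; apply memb_In; auto|auto]. }
        assert (H1 := Ha1c (N::t) HNt ltac:(simpl; lia)).
        rewrite cobdry_cons in H1.
        assert (Heq : Ev N (Tc N a1) t = Ev N (cobdry psi) t).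
        { apply Ev_agree. intros u Hu Hi Hlu. apply Hpsi.
          - split; auto. apply (Hcl t); [exact Ht|]. intros z [Hz|Hz]; [subst; apply memb_In; auto|apply Hi; auto].
          - lia. }
        lia.
      * rewrite Ha10 by auto. rewrite Ev_notin by auto. lia.
Qed.

Lemma Ev_zero v s : Ev v (fun _ => 0%Z) s = 0%Z.
Proof.
  induction s as [|x t IH]; [reflexivity|]. simpl.
  destruct (Nat.eqb x v); [destruct (memb v t); auto|].
  change (Tc x (fun _ => 0%Z)) with (fun _ : list nat => 0%Z). rewrite IH. reflexivity.
Qed.

Lemma dist_self (X : MetricSpace) (x : X) : dist X x x = 0.
Proof. apply (dist_eq0 X). reflexivity. Qed.

Lemma dist_pos (X : MetricSpace) (x y : X) : x <> y -> 0 < dist X x y.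
Proof.
  intros H. destruct (Rle_lt_or_eq_dec 0 _ (dist_nonneg X x y)) as [H1|H1]; auto.
  exfalso. apply H. apply (dist_eq0 X). auto.
Qed.

Lemma list_min {I:Type} (h : I -> R) (l : list I) :
  (forall i, 0 < h i) ->
  0 < fold_right (fun i acc => Rmin (h i) acc) 1 l /\
  forall i, In i l -> fold_right (fun i acc => Rmin (h i) acc) 1 l <= h i.
Proof.
  intros Hp. induction l as [|j l [IH1 IH2]]; simpl.
  - split; [lra| intros i []].
  - split.
    + apply Rmin_glb_lt; auto.
    + intros i [Hi|Hi].
      * subst. apply Rmin_l.
      * eapply Rle_trans; [apply Rmin_r| auto].
Qed.

Lemma fin_min (X : MetricSpace) (P : X -> R -> Prop) :
  compact_space X ->
  (forall x r r', P x r -> 0 < r' -> r' <= r -> P x r') ->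
  (forall x, exists r d, 0 < r /\ 0 < d /\ forall x', dist X x x' < d -> P x' r) ->
  exists r, 0 < r /\ forall x, P x r.
Proof.
  intros Hc Hmon Hloc.
  pose (U := fun (i : X * R * R) (x' : X) =>
     0 < snd (fst i) /\ 0 < snd i /\ (forall x'', dist X (fst (fst i)) x'' < snd i -> P x'' (snd (fst i)))
     /\ dist X (fst (fst i)) x' < snd i).
  destruct (Hc _ U) as [l Hl].
  - intros [[x r] d] x' (Hr & Hd & HP & Hx'). simpl in *.
    exists (d - dist X x x'). split; [lra|].
    intros y Hy. unfold U; simpl. repeat split; auto.
    pose proof (dist_tri X x x' y). lra.
  - intros x. destruct (Hloc x) as (r & d & Hr & Hd & HP).
    exists (x, r, d). unfold U; simpl. repeat split; auto. rewrite dist_self. auto.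
  - pose (h := fun (i : X * R * R) => if Rlt_dec 0 (snd (fst i)) then snd (fst i) else 1).
    assert (Hh : forall i, 0 < h i).
    { intros i. unfold h. destruct (Rlt_dec 0 (snd (fst i))); lra. }
    destruct (list_min h l Hh) as [H1 H2].
    exists (fold_right (fun i acc => Rmin (h i) acc) 1 l). split; auto.
    intros x. destruct (Hl x) as [[[x0 r] d] [Hin (Hr & Hd & HP & Hx)]]. simpl in *.
    specialize (H2 _ Hin). unfold h in H2. simpl in H2. destruct (Rlt_dec 0 r); [|lra].
    apply (Hmon x r); auto.
Qed.

Theorem theorem1p15 (X Y : MetricSpace) (n : nat) :
  compact_space X -> compact_space Y -> (1 <= n)%nat ->
  covering_dim X n -> covering_dim Y n ->
  cech_nonzero X n ->
  exists eps : R, 0 < eps /\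
    forall f : X -> Y, continuous f -> eps_mapping eps f -> cech_map_nonzero f n.
Proof.
  intros HcX HcY Hn HdX HdY [U [alpha [[HUo Hcoc] Hnz]]].
  assert (Hx0 : exists x : X, True).
  { apply NNPP. intro Hno. apply Hnz. exists U, (fun i => i). split; [auto|split].
    - intros j Hj. split; auto.
    - destruct n as [|n']; [lia|]. exists (fun _ => 0%Z).
      intros s [_ [_ [x _]]]. exfalso; apply Hno; eauto. }
  destruct Hx0 as [xp _].
  assert (HszU : (0 < fc_size U)%nat). { destruct (proj2 HUo xp) as [i [Hi _]]; lia. }
  destruct (fin_min X (fun z r => exists i, (i < fc_size U)%nat /\
              forall w, dist X z w < r -> fc_set U i w) HcX) as [lam [Hlam HL]].
  { intros x r r' [i [Hi H]] _ Hle. exists i; split; auto. intros w Hw; apply H; lra. }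
  { intros x. destruct (proj2 HUo x) as [i [Hi Hx]].
    destruct (proj1 HUo i Hi x Hx) as [r [Hr Hball]].
    exists (r/2), (r/2). repeat split; try lra. intros x' Hx'. exists i. split; auto.
    intros w Hw. apply Hball. pose proof (dist_tri X x x' w). lra. }
  exists (lam/2). split; [lra|]. intros f Hf Heps.
  assert (Hrho : forall x0 : X, exists rho, 0 < rho /\
             forall z, dist Y (f z) (f x0) < rho -> dist X z x0 < lam).
  { intros x0.
    destruct (fin_min X (fun z r => (exists w, f w = f x0 /\ dist X z w < lam/2) \/
                 r <= dist Y (f z) (f x0)) HcX) as [rho [Hrho HP]].
    - intros z r r' [H|H] _ Hle; [left; auto|right; lra].
    - intros z. destruct (classic (f z = f x0)) as [Heq|Hne].
      + exists 1, (lam/2). repeat split; try lra. intros z' Hz'. left. exists z.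
        split; auto. rewrite dist_sym; auto.
      + assert (HD := dist_pos Y _ _ Hne).
        destruct (Hf z (dist Y (f z) (f x0) / 2)) as [d [Hd Hcont]]; [lra|].
        exists (dist Y (f z) (f x0) / 2), d. repeat split; try lra. intros z' Hz'. right.
        specialize (Hcont z' Hz'). pose proof (dist_tri Y (f z) (f z') (f x0)). lra.
    - exists rho. split; auto. intros z Hz. destruct (HP z) as [[w [Hw Hzw]]|H]; [|lra].
      destruct (Heps (f x0) (ex_intro _ x0 eq_refl)) as [dd [Hdd Hdiam]].
      specialize (Hdiam w x0 Hw eq_refl). pose proof (dist_tri X z w x0). lra. }
  pose (O := fun y : Y => forall x, f x <> y).
  assert (HOo : is_open O).
  { intros y Hy.
    destruct (fin_min X (fun x r => r <= dist Y (f x) y) HcX) as [r [Hr HP]].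
    - intros x r r' H _ Hle; lra.
    - intros x. assert (HD := dist_pos Y _ _ (Hy x)).
      destruct (Hf x (dist Y (f x) y / 2)) as [d [Hd Hc]]; [lra|].
      exists (dist Y (f x) y / 2), d. repeat split; try lra. intros x' Hx'.
      specialize (Hc x' Hx'). pose proof (dist_tri Y (f x) (f x') y). lra.
    - exists r. split; auto. intros y' Hy' x Hfx. specialize (HP x). rewrite Hfx in HP.
      rewrite dist_sym in HP. lra. }
  pose (setI := fun (i : option (X * R)) (y : Y) => match i with
     | Some (x0, rho) => 0 < rho /\ (forall z, dist Y (f z) (f x0) < rho -> dist X z x0 < lam)
                         /\ dist Y (f x0) y < rho / 4
     | None => O y end).
  assert (HsetIo : forall i, is_open (setI i)).
  { intros [[x0 rho]|] y Hy; simpl in Hy |- *.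
    + destruct Hy as (Hr & Hp & Hd). exists (rho/4 - dist Y (f x0) y). split; [lra|].
      intros y' Hy'. repeat split; auto. pose proof (dist_tri Y (f x0) y y'). lra.
    + apply HOo; auto. }
  destruct (HcY (option (X*R)) setI HsetIo) as [l Hl].
  { intros y. destruct (classic (exists x, f x = y)) as [[x Hx]|Hno].
    + destruct (Hrho x) as [rho [Hr Hp]]. exists (Some (x, rho)). simpl.
      repeat split; auto. subst y. rewrite dist_self. lra.
    + exists None. simpl. intros x Hx. apply Hno; eauto. }
  pose (V := {| fc_size := length l; fc_set := fun k => setI (nth k l None) |}).
  assert (HVo : open_fcover V).
  { split.
    - intros i Hi. simpl. apply HsetIo.
    - intros y. destruct (Hl y) as [i [Hin Hy]].
      destruct (In_nth l i None Hin) as [k [Hk Hnth]]. exists k. split; auto.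
      simpl. rewrite Hnth; auto. }
  destruct HdY as [HdimY _]. destruct (HdimY V HVo) as [W [HWo [[lamV HlamV] HWord]]].
  pose (N := fc_size W).
  pose (good := fun j => match nth (lamV j) l None with Some _ => true | None => false end).
  assert (Hg : exists g : nat -> nat, forall j, (g j < fc_size U)%nat /\
            forall x0 rho, nth (lamV j) l None = Some (x0, rho) ->
            forall w, dist X x0 w < lam -> fc_set U (g j) w).
  { assert (H : forall j, exists i, (i < fc_size U)%nat /\
            forall x0 rho, nth (lamV j) l None = Some (x0, rho) ->
            forall w, dist X x0 w < lam -> fc_set U i w).
    { intros j. destruct (nth (lamV j) l None) as [[x0 rho]|] eqn:Hk.
      - destruct (HL x0) as [i [Hi Hb]]. exists i. split; auto.
        intros x1 rho1 Heq w Hw. inversion Heq; subst. auto.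
      - exists 0%nat. split; [lia| intros; discriminate]. }
    exists (fun j => proj1_sig (constructive_indefinite_description _ (H j))).
    intros j. destruct (constructive_indefinite_description _ (H j)); simpl; auto. }
  destruct Hg as [g Hg].

  pose (W' := {| fc_size := S N; fc_set := fun j y =>
      ((j < N)%nat /\ good j = true /\ fc_set W j y) \/
      (j = N /\ exists k, (k < N)%nat /\ good k = false /\ fc_set W k y) |}).
  assert (Hdata : forall j y, (j < N)%nat -> fc_set W' j y -> exists x0 rho,
      nth (lamV j) l None = Some (x0,rho) /\ 0 < rho /\
      (forall z, dist Y (f z) (f x0) < rho -> dist X z x0 < lam) /\ dist Y (f x0) y < rho/4).
  { intros j y Hj [[_ [Hgd HW]]|[Hj' _]]; [|lia].
    destruct (HlamV j Hj) as [_ Hsub]. specialize (Hsub y HW). simpl in Hsub.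
    unfold good in Hgd. destruct (nth (lamV j) l None) as [[x0 rho]|]; [|discriminate].
    exists x0, rho. simpl in Hsub. tauto. }
  assert (HW3 : forall y, fc_set W' N y -> forall x, f x <> y).
  { intros y [[Hlt _]|[_ [k [Hk [Hbad HW]]]]]; [lia|].
    destruct (HlamV k Hk) as [_ Hsub]. specialize (Hsub y HW). simpl in Hsub.
    unfold good in Hbad. destruct (nth (lamV k) l None); [discriminate|]. exact Hsub. }
  assert (HW'o : open_fcover W').
  { split.
    - intros j Hj y Hy. destruct Hy as [[Hjl [Hgd HW]]|[Hjn [k [Hk [Hbad HW]]]]].
      + destruct (proj1 HWo j Hjl y HW) as [r [Hr Hb]]. exists r; split; auto.
        intros y' Hy'. left. auto.
      + destruct (proj1 HWo k Hk y HW) as [r [Hr Hb]]. exists r; split; auto.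
        intros y' Hy'. right. split; auto. exists k; auto.
    - intros y. destruct (proj2 HWo y) as [k [Hk HW]]. destruct (good k) eqn:Hgd.
      + exists k. split; [simpl; lia|]. left; auto.
      + exists N. split; [simpl; lia|]. right. split; auto. exists k; auto. }
  assert (HW'left : forall j y, j <> N -> fc_set W' j y -> (j < N)%nat /\ good j = true /\ fc_set W j y).
  { intros j y Hne [H|[H _]]; [auto|lia]. }
  assert (HWord' : order_le W' n).
  { intros L HND HF Hlen [y Hy]. rewrite Forall_forall in HF, Hy.
    destruct (classic (In N L)) as [HinN|HnN].
    - destruct (Hy N HinN) as [[Hlt _]|[_ [k [Hk [Hbad HWk]]]]]; [lia|].
      pose (h := fun i => if Nat.eqb i N then k else i).
      apply (HWord (map h L)).
      + apply NoDup_map_NoDup_ForallPairs; auto. intros a b Ha Hb Heq. unfold h in Heq.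
        destruct (Nat.eqb a N) eqn:Ea; destruct (Nat.eqb b N) eqn:Eb;
          apply Nat.eqb_eq in Ea || apply Nat.eqb_neq in Ea;
          apply Nat.eqb_eq in Eb || apply Nat.eqb_neq in Eb; try congruence.
        * destruct (HW'left b y Eb (Hy b Hb)) as [_ [Hg' _]]. rewrite Heq in Hbad. congruence.
        * destruct (HW'left a y Ea (Hy a Ha)) as [_ [Hg' _]]. rewrite <- Heq in Hbad. congruence.
      + rewrite Forall_map, Forall_forall. intros i Hi. unfold h.
        destruct (Nat.eqb i N) eqn:Ei; [exact Hk|]. apply Nat.eqb_neq in Ei.
        apply (HW'left i y Ei (Hy i Hi)).
      + rewrite length_map; auto.
      + exists y. rewrite Forall_map, Forall_forall. intros i Hi. unfold h.
        destruct (Nat.eqb i N) eqn:Ei; [exact HWk|]. apply Nat.eqb_neq in Ei.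
        apply (HW'left i y Ei (Hy i Hi)).
    - apply (HWord L); auto.
      + rewrite Forall_forall. intros i Hi. apply (HW'left i y); auto. intro; subst; auto.
      + exists y. rewrite Forall_forall. intros i Hi. apply (HW'left i y); auto. intro; subst; auto. }
  assert (HW4 : forall j x, (j < N)%nat -> fc_set W' j (f x) -> fc_set U (g j) x).
  { intros j x Hj H. destruct (Hdata j (f x) Hj H) as (x0 & rho & Hk & Hr & Hp & Hd).
    apply (proj2 (Hg j) x0 rho Hk). rewrite dist_sym. apply Hp. rewrite dist_sym. lra. }
  assert (HW5 : forall t y, Forall (fun i => (i < N)%nat) t -> Forall (fun i => fc_set W' i y) t ->
             exists x, Forall (fun i => fc_set U (g i) x) t).
  { intros t y Hlt Hy. destruct t as [|i0 t'].
    - exists xp; constructor.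
    - rewrite Forall_forall in Hlt, Hy.
      destruct (Hdata i0 y (Hlt i0 (or_introl eq_refl)) (Hy i0 (or_introl eq_refl)))
        as (x0 & r0 & Hk0 & Hr0 & Hp0 & Hd0).
      exists x0. rewrite Forall_forall. intros i Hi.
      destruct (Hdata i y (Hlt i Hi) (Hy i Hi)) as (x1 & r1 & Hk1 & Hr1 & Hp1 & Hd1).
      apply (proj2 (Hg i) x1 r1 Hk1).
      pose proof (dist_tri Y (f x1) y (f x0)). pose proof (dist_sym Y y (f x0)).
      pose proof (dist_sym Y (f x0) (f x1)).
      destruct (Rle_lt_dec r0 r1).
      + assert (dist X x0 x1 < lam) by (apply Hp1; lra). rewrite dist_sym; auto.
      + apply Hp0. lra. }

  pose (a := fun t => alpha (map g t)).
  assert (HLc : forall s y, length s = S (S n) -> Forall (fun i => (i < N)%nat) s ->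
            Forall (fun i => fc_set W' i y) s -> cobdry a s = 0%Z).
  { intros s y Hls Hlt Hy. unfold a. rewrite cobdry_map. apply Hcoc.
    split; [rewrite length_map; auto|split].
    - rewrite Forall_map, Forall_forall. intros i _. apply Hg.
    - destruct (HW5 s y Hlt Hy) as [x Hx]. exists x. rewrite Forall_map. auto. }
  pose (lk := fun u => (Forall (fun i => (i < S N)%nat) (N::u) /\
                        exists y, Forall (fun i => fc_set W' i y) (N::u)) /\ memb N u = false).
  destruct (Acyc n (S N) lk a) as [beta Hbeta].
  { intros t t' [[HF [y Hy]] Hm] Hi. assert (Hi' : incl (N::t') (N::t)).
    { intros z [Hz|Hz]; [left; auto|right; apply Hi; auto]. }
    split; [split|].
    - eapply incl_Forall; eauto.
    - exists y. eapply incl_Forall; eauto.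
    - apply memb_notIn. apply memb_notIn in Hm. intro H; apply Hm, Hi, H. }
  { intros t i [[HF _] _] Hi. rewrite Forall_forall in HF. apply HF. right; auto. }
  { intros t [[HF Hy] Hm] Hnd Hls. apply (HWord' (N::t)); auto.
    - constructor; auto. apply memb_notIn; auto.
    - simpl; lia. }
  { intros s [[HF [y Hy]] Hm] Hls. apply (HLc s y); auto.
    - rewrite Forall_forall in HF |- *. intros i Hi. assert (i <> N).
      { intro; subst. apply memb_notIn in Hm; auto. }
      specialize (HF i (or_intror Hi)). lia.
    - inversion Hy; auto. }
  pose (cY := fun t => (Z0 N a t + Ev N beta t)%Z).
  exists W', cY. split; [split; auto|].
  - intros s [Hls [HF [y Hy]]]. unfold cY. rewrite cobdry_add, cobdry_Z0, cobdry_Ev.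
    destruct (memb N s) eqn:Hm.
    + rewrite Z.add_opp_r, <- Ev_sub. rewrite <- (Ev_zero N s). apply Ev_agree.
      intros u Hu Hi Hlu. rewrite Hbeta; [lia| |lia].
      assert (Hi' : incl (N::u) s).
      { intros z [Hz|Hz]; [subst; apply memb_In; auto|apply Hi; auto]. }
      split; [split|auto].
      * eapply incl_Forall; eauto.
      * exists y. eapply incl_Forall; eauto.
    + rewrite Ev_notin by auto. rewrite (HLc s y); auto.
      rewrite Forall_forall in HF |- *. intros i Hi. assert (i <> N).
      { intro; subst. apply memb_notIn in Hm; auto. }
      specialize (HF i Hi). simpl in HF. lia.
  - intro Hzero. apply Hnz. destruct Hzero as [W2 [mu [HW2o [Href Hcob]]]].
    exists W2, (fun j => g (mu j)). split; auto. split.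
    + intros j Hj. destruct (Href j Hj) as [Hmu Hsub]. split; [apply Hg|].
      intros x Hx. specialize (Hsub x Hx). simpl in Hsub, Hmu.
      destruct (Nat.eq_dec (mu j) N) as [He|Hne].
      * exfalso. rewrite He in Hsub. apply (HW3 _ Hsub x); auto.
      * apply HW4; auto; lia.
    + destruct n as [|n']; [lia|]. destruct Hcob as [b Hb]. exists b.
      intros s Hs. rewrite <- Hb; auto. unfold cY.
      assert (Hm : memb N (map mu s) = false).
      { apply memb_notIn. destruct Hs as [_ [HF [x Hx]]]. intro Hin.
        apply in_map_iff in Hin as [j [Hj Hin]]. rewrite Forall_forall in Hx, HF.
        destruct (Href j (HF j Hin)) as [_ Hsub]. specialize (Hsub x (Hx j Hin)).
        simpl in Hsub. rewrite Hj in Hsub. apply (HW3 _ Hsub x); auto. }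
      rewrite Ev_notin by auto. unfold Z0. rewrite Hm. unfold a. rewrite map_map. lia.
Qed.
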